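(* Let $C\ge 2$ and $N\ge 1$ be integers and let $\boldsymbol{h}_{i,c}\in\mathbb{R}^p$ ($1\le i\le N$, $1\le c\le C$) be fixed (not trained) feature vectors, $\boldsymbol{h}_{i,c}$ being the $i$-th example of class $c$. Define the class-means $\boldsymbol{\mu}_c=\frac1N\sum_{i}\boldsymbol{h}_{i,c}$, the global mean $\boldsymbol{\mu}_G=\frac{1}{NC}\sum_{i,c}\boldsymbol{h}_{i,c}$, the total covariance $\boldsymbol{\Sigma}_T=\frac{1}{NC}\sum_{i,c}(\boldsymbol{h}_{i,c}-\boldsymbol{\mu}_G)(\boldsymbol{h}_{i,c}-\boldsymbol{\mu}_G)^\top$, the within-class covariance $\boldsymbol{\Sigma}_W=\frac{1}{NC}\sum_{i,c}(\boldsymbol{h}_{i,c}-\boldsymbol{\mu}_c)(\boldsymbol{h}_{i,c}-\boldsymbol{\mu}_c)^\top$, and the matrix $\dot{\boldsymbol{M}}=[\boldsymbol{\mu}_1-\boldsymbol{\mu}_G,\dots,\boldsymbol{\mu}_C-\boldsymbol{\mu}_G]\in\mathbb{R}^{p\times C}$. Consider the (Webb–Lowe) linear classifier with weights $\boldsymbol{W}\in\mathbb{R}^{C\times p}$ (rows $\boldsymbol{w}_c^\top$) and biases $\boldsymbol{b}=(b_c)\in\mathbb{R}^C$ given by $$\boldsymbol{W}=\tfrac1C\dot{\boldsymbol{M}}^\top\boldsymbol{\Sigma}_T^\dagger,\qquad \boldsymbol{b}=\tfrac1C\mathbf{1}_C-\tfrac1C\dot{\boldsymbol{M}}^\top\boldsymbol{\Sigma}_T^\dagger\boldsymbol{\mu}_G,$$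 where $\dagger$ is the Moore–Penrose pseudoinverse and $\mathbf{1}_C$ the all-ones vector. Assume (i) $\boldsymbol{\Sigma}_W=\mathbf{0}$, and (ii) $\boldsymbol{\mu}_c\neq\boldsymbol{\mu}_G$ for all $c$, $\|\boldsymbol{\mu}_c-\boldsymbol{\mu}_G\|_2=\|\boldsymbol{\mu}_{c'}-\boldsymbol{\mu}_G\|_2$ for all $c,c'$, and, with $\tilde{\boldsymbol{\mu}}_c=(\boldsymbol{\mu}_c-\boldsymbol{\mu}_G)/\|\boldsymbol{\mu}_c-\boldsymbol{\mu}_G\|_2$, $\langle\tilde{\boldsymbol{\mu}}_c,\tilde{\boldsymbol{\mu}}_{c'}\rangle=\frac{C}{C-1}\delta_{c,c'}-\frac{1}{C-1}$ for all $c,c'$. Then (a) $\dfrac{\boldsymbol{W}^\top}{\|\boldsymbol{W}\|_F}=\dfrac{\dot{\boldsymbol{M}}}{\|\dot{\boldsymbol{M}}\|_F}$, and (b) for every $\boldsymbol{h}\in\mathbb{R}^p$, $\arg\max_{c'}\left(\langle\boldsymbol{w}_{c'},\boldsymbol{h}\rangle+b_{c'}\right)=\arg\min_{c'}\|\boldsymbol{h}-\boldsymbol{\mu}_{c'}\|_2$.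
   Context: $\delta_{c,c'}$ is the Kronecker delta and $\|\cdot\|_F$ the Frobenius norm. The classifier above is (by a result of Webb and Lowe) the optimal linear classifier under mean-squared-error loss when the features are fixed; in the claim it is simply the classifier defined by the displayed formulas. The predicted label of a feature $\boldsymbol{h}$ is the index maximizing $\langle\boldsymbol{w}_c,\boldsymbol{h}\rangle+b_c$. *)

(* Defs.v *)
From HB Require Import structures.
From mathcomp Require Import all_boot all_order all_algebra.
From Stdlib Require Import ClassicalEpsilon.
Set Implicit Arguments. Unset Strict Implicit. Unset Printing Implicit Defensive.
Import Order.TTheory GRing.Theory Num.Theory.
Local Open Scope ring_scope.

Section Defs.
Variable R : rcfType.

Definition vdot (p : nat) (u v : 'cV[R]_p) : R := (u^T *m v) 0 0.
Definition vnorm (p : nat) (u : 'cV[R]_p) : R := Num.sqrt (vdot u u).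

Definition frob (m n : nat) (A : 'M[R]_(m, n)) : R :=
  Num.sqrt (\sum_(i < m) \sum_(j < n) A i j ^+ 2).

(* Moore--Penrose pseudoinverse: the (unique) X satisfying the four
   Penrose conditions (real case, so conjugate transpose = transpose). *)
Definition is_MP_pinv (m n : nat) (A : 'M[R]_(m, n)) (X : 'M[R]_(n, m)) : Prop :=
  [/\ A *m X *m A = A, X *m A *m X = X,
      (A *m X)^T = A *m X & (X *m A)^T = X *m A].

Definition mp_pinv (m n : nat) (A : 'M[R]_(m, n)) : 'M[R]_(n, m) :=
  epsilon (inhabits 0) (is_MP_pinv A).

Variables (p N C : nat).
Variable h : 'I_N -> 'I_C -> 'cV[R]_p.

Definition class_mean (c : 'I_C) : 'cV[R]_p := (N%:R)^-1 *: \sum_(i < N) h i c.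
Definition global_mean : 'cV[R]_p :=
  ((N * C)%:R)^-1 *: \sum_(i < N) \sum_(c < C) h i c.
Definition SigmaT : 'M[R]_p :=
  ((N * C)%:R)^-1 *: \sum_(i < N) \sum_(c < C)
     ((h i c - global_mean) *m (h i c - global_mean)^T).
Definition SigmaW : 'M[R]_p :=
  ((N * C)%:R)^-1 *: \sum_(i < N) \sum_(c < C)
     ((h i c - class_mean c) *m (h i c - class_mean c)^T).
Definition Mdot : 'M[R]_(p, C) :=
  \matrix_(k < p, c < C) (class_mean c - global_mean) k 0.

Definition WL_W : 'M[R]_(C, p) := (C%:R)^-1 *: (Mdot^T *m mp_pinv SigmaT).
Definition WL_b : 'cV[R]_C :=
  (C%:R)^-1 *: const_mx 1 - (C%:R)^-1 *: (Mdot^T *m mp_pinv SigmaT *m global_mean).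

Definition WL_score (x : 'cV[R]_p) (c : 'I_C) : R :=
  vdot (row c WL_W)^T x + WL_b c 0.

End Defs.

(* Main.v *)
Require Import Defs.
From mathcomp Require Import all_boot all_order all_algebra.
From mathcomp Require Import ring lra.
From Stdlib Require Import ClassicalEpsilon.
Import Order.TTheory GRing.Theory Num.Theory.
Local Open Scope ring_scope.

Section Gen.
Variable R : rcfType.

Lemma trmxZ' (m n : nat) (a : R) (A : 'M[R]_(m, n)) : (a *: A)^T = a *: A^T.
Proof. by apply/matrixP => i j; rewrite !mxE. Qed.

Lemma vdotE (p : nat) (u v : 'cV[R]_p) : vdot u v = \sum_k u k 0 * v k 0.
Proof. by rewrite /vdot mxE; apply: eq_bigr => k _; rewrite mxE. Qed.

Lemma vdot_ge0 (p : nat) (u : 'cV[R]_p) : 0 <= vdot u u.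
Proof. by rewrite vdotE; apply: sumr_ge0 => k _; rewrite -expr2 sqr_ge0. Qed.

Lemma vdot_eq0 (p : nat) (u : 'cV[R]_p) : vdot u u = 0 -> u = 0.
Proof.
rewrite vdotE => H; apply/matrixP => i j; rewrite ord1 mxE.
have H0 : forall k : 'I_p, true -> 0 <= u k 0 * u k 0.
  by move=> k _; rewrite -expr2 sqr_ge0.
have /eqP := psumr_eq0P H0 H (i := i) isT.
by rewrite -expr2 sqrf_eq0 => /eqP.
Qed.

Lemma vdotZ (p : nat) (a b : R) (u v : 'cV[R]_p) :
  vdot (a *: u) (b *: v) = a * b * vdot u v.
Proof.
rewrite !vdotE mulr_sumr; apply: eq_bigr => k _; rewrite !mxE; ring.
Qed.

Lemma vdot_exp (p : nat) (y m : 'cV[R]_p) :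
  vdot (y - m) (y - m) = vdot y y - 2 * vdot m y + vdot m m.
Proof.
rewrite !vdotE mulr_sumr -sumrB -big_split /=; apply: eq_bigr => k _.
rewrite !mxE; ring.
Qed.

Lemma MP_unique (m n : nat) (A : 'M[R]_(m, n)) X Y :
  is_MP_pinv A X -> is_MP_pinv A Y -> X = Y.
Proof.
case=> [h1 h2 h3 h4] [k1 k2 k3 k4].
have e1 : X = X *m (X^T *m A^T) by rewrite -trmx_mul h3 mulmxA h2.
have e2 : A^T = A^T *m (A *m Y) by rewrite -k3 -trmx_mul k1.
have eX : X = X *m A *m Y.
  rewrite {1}e1 {1}e2 (mulmxA X^T) -trmx_mul h3 !mulmxA h2 //.
have f1 : Y = (A^T *m Y^T) *m Y by rewrite -trmx_mul k4 k2.
have f2 : A^T = X *m A *m A^T by rewrite -h4 -trmx_mul mulmxA h1.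
have eY : Y = X *m A *m Y.
  rewrite {1}f1 {1}f2 -(mulmxA (X *m A)) -trmx_mul k4 -!mulmxA (mulmxA Y) k2 //.
by rewrite eX -eY.
Qed.

End Gen.
Arguments vdot_ge0 {R p} u.
Arguments vdot_eq0 {R p} u.


Ltac pull := repeat (rewrite -scalemxAl || rewrite -scalemxAr || rewrite scalerA).

Section Gen2.
Variable R : rcfType.

Lemma MP_scaled (n : nat) (B : 'M[R]_n) (g c : R) :
  B^T = B -> B *m B = g *: B -> g != 0 -> c != 0 ->
  is_MP_pinv (c^-1 *: B) ((c * g^-2) *: B).
Proof.
move=> BT BB g0 c0.
have BBB : B *m B *m B = g ^+ 2 *: B by rewrite BB -scalemxAl BB scalerA expr2.
split.
- pull; rewrite BBB; pull; congr (_ *: _).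
  by field; rewrite c0 g0.
- pull; rewrite BBB; pull; congr (_ *: _).
  by field; rewrite c0 g0.
- by pull; rewrite BB; pull; rewrite trmxZ' BT.
- by pull; rewrite BB; pull; rewrite trmxZ' BT.
Qed.

Lemma frob_tr (m n : nat) (A : 'M[R]_(m, n)) : frob A^T = frob A.
Proof.
rewrite /frob exchange_big /=; congr Num.sqrt.
by apply: eq_bigr => i _; apply: eq_bigr => j _; rewrite mxE.
Qed.

Lemma frob_scale (m n : nat) (a : R) (A : 'M[R]_(m, n)) : frob (a *: A) = `|a| * frob A.
Proof.
rewrite /frob -sqrtr_sqr -sqrtrM ?sqr_ge0 //; congr Num.sqrt.
rewrite mulr_sumr; apply: eq_bigr => i _; rewrite mulr_sumr; apply: eq_bigr => j _.
by rewrite mxE exprMn.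
Qed.

End Gen2.
Arguments MP_scaled {R n B g c}.
Arguments MP_unique {R m n A X Y}.


Section Main.
Variables (R : rcfType) (p N C : nat) (h : 'I_N -> 'I_C -> 'cV[R]_p).
Hypotheses (HC : (2 <= C)%N) (HN : (1 <= N)%N).
Variable c0 : 'I_C.

Local Notation mm c := (class_mean h c - global_mean h).
Local Notation M := (Mdot h).

Lemma C0 : C%:R != 0 :> R.
Proof. by rewrite pnatr_eq0 gtn_eqF // (leq_trans _ HC). Qed.
Lemma N0 : N%:R != 0 :> R.
Proof. by rewrite pnatr_eq0 gtn_eqF. Qed.

Lemma sum_m : \sum_c mm c = 0.
Proof.
rewrite sumrB sumr_const card_ord /class_mean /global_mean -scaler_sumr exchange_big /=.
rewrite -scaler_nat scalerA.
have -> : C%:R * (N * C)%:R^-1 = N%:R^-1 :> R.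
  by rewrite natrM invfM mulrC -mulrA mulVf ?mulr1 ?C0.
by rewrite subrr.
Qed.

Lemma Mentry k c : M k c = mm c k 0.
Proof. by rewrite mxE. Qed.

Lemma h_eq (HW : SigmaW h = 0) i c : h i c = class_mean h c.
Proof.
apply/eqP; rewrite -subr_eq0; apply/eqP; apply/matrixP => k j; rewrite ord1 [RHS]mxE.
have H := congr1 (fun A : 'M_p => A k k) HW; move: H; rewrite /= /SigmaW [LHS]mxE [RHS]mxE summxE.
have NC0 : (N*C)%:R != 0 :> R by rewrite natrM mulf_neq0 ?N0 ?C0.
move/eqP; rewrite mulf_eq0 invr_eq0 (negbTE NC0) /= => /eqP H.
have E : forall i c, ((h i c - class_mean h c) *m (h i c - class_mean h c)^T) k k
   = (h i c - class_mean h c) k 0 ^+ 2.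
  by move=> i' c'; rewrite mxE big_ord1 [_^T _ _]mxE expr2.
rewrite (eq_bigr (fun i => \sum_c (h i c - class_mean h c) k 0 ^+ 2)) in H; last first.
  by move=> i' _; rewrite summxE; apply: eq_bigr => c' _; exact: E.
have H1 := psumr_eq0P (fun i _ => sumr_ge0 _ (fun c _ => sqr_ge0 _)) H (i := i) isT.
have /eqP := psumr_eq0P (fun c _ => sqr_ge0 _) H1 (i := c) isT.
by rewrite sqrf_eq0 => /eqP.
Qed.

Hypothesis HW : SigmaW h = 0.
Hypothesis Hne : forall c : 'I_C, class_mean h c != global_mean h.
Hypothesis Hnorm : forall c c' : 'I_C,
     vnorm (class_mean h c - global_mean h) = vnorm (class_mean h c' - global_mean h).
Hypothesis Hdot : forall c c' : 'I_C,
     vdot ((vnorm (class_mean h c - global_mean h))^-1 *: (class_mean h c - global_mean h))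
          ((vnorm (class_mean h c' - global_mean h))^-1 *: (class_mean h c' - global_mean h))
     = C%:R / (C%:R - 1) * (c == c')%:R - 1 / (C%:R - 1).

Lemma SigT : SigmaT h = C%:R^-1 *: (M *m M^T).
Proof.
rewrite /SigmaT.
under eq_bigr => i _ do under eq_bigr => c _ do rewrite h_eq //.
rewrite sumr_const card_ord -scaler_nat scalerA.
have -> : (N * C)%:R^-1 * N%:R = C%:R^-1 :> R.
  by rewrite natrM invfM mulrAC mulVf ?mul1r ?N0.
congr (_ *: _); apply/matrixP => k l; rewrite summxE [RHS]mxE.
by apply: eq_bigr => c _; rewrite mxE big_ord1 !Mentry ![_^T _ _]mxE Mentry.
Qed.

Definition A := vdot (mm c0) (mm c0).

Lemma vdot_self c : vdot (mm c) (mm c) = A.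
Proof.
have := Hnorm c c0; rewrite /vnorm /A => e.
by rewrite -(sqr_sqrtr (vdot_ge0 (mm c))) e sqr_sqrtr // vdot_ge0.
Qed.

Lemma A_neq0 : A != 0.
Proof.
apply/eqP => /vdot_eq0 /eqP; rewrite subr_eq0; exact/negP/Hne.
Qed.

Lemma A_gt0 : 0 < A.
Proof. by rewrite lt_def A_neq0 vdot_ge0. Qed.

Lemma vnorm_m c : vnorm (mm c) = Num.sqrt A.
Proof. by rewrite /vnorm vdot_self. Qed.

Lemma vdot_m c c' : vdot (mm c) (mm c') =
  A * (C%:R / (C%:R - 1) * (c == c')%:R - 1 / (C%:R - 1)).
Proof.
have := Hdot c c'; rewrite !vnorm_m vdotZ -invfM -expr2 sqr_sqrtr ?vdot_ge0 // => <-.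
by rewrite mulVKf // A_neq0.
Qed.

Definition g := A * (C%:R / (C%:R - 1)).

Lemma C1_gt0 : 0 < C%:R - 1 :> R.
Proof. by rewrite subr_gt0 ltr1n. Qed.

Lemma g_gt0 : 0 < g.
Proof.
rewrite /g mulr_gt0 ?A_gt0 // divr_gt0 ?C1_gt0 //.
by rewrite ltr0n (leq_trans _ HC).
Qed.

Lemma g_neq0 : g != 0.
Proof. by rewrite gt_eqF // g_gt0. Qed.

Lemma MtM c c' : (M^T *m M) c c' = vdot (mm c) (mm c').
Proof.
by rewrite mxE vdotE; apply: eq_bigr => k _; rewrite [_^T _ _]mxE !Mentry.
Qed.

Lemma MG : M *m (M^T *m M) = g *: M.
Proof.
apply/matrixP => k c'; rewrite [LHS]mxE [RHS]mxE.
under eq_bigr => c _ do rewrite MtM vdot_m.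
set a := C%:R / (C%:R - 1) :> R; set b := 1 / (C%:R - 1) :> R.
rewrite (eq_bigr (fun c => (A * a) * (M k c * (c == c')%:R) - (A * b) * M k c)); last first.
  by move=> c _; ring.
rewrite sumrB -!mulr_sumr.
have -> : \sum_c M k c * (c == c')%:R = M k c'.
  rewrite (bigD1 c') //= eqxx mulr1 big1 ?addr0 // => c /negbTE ->.
  by rewrite mulr0.
have -> : \sum_c M k c = 0.
  have -> : \sum_c M k c = (\sum_c mm c) k 0.
    by rewrite summxE; apply: eq_bigr => c _; rewrite Mentry.
  by rewrite sum_m mxE.
by rewrite mulr0 subr0 /g.
Qed.

Local Notation B := (M *m M^T).

Lemma BT : B^T = B.
Proof. by rewrite trmx_mul trmxK. Qed.

Lemma BB : B *m B = g *: B.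
Proof. by rewrite mulmxA -(mulmxA M) MG -scalemxAl. Qed.

Lemma pinvE : mp_pinv (SigmaT h) = (C%:R * g^-2) *: B.
Proof.
rewrite SigT.
have HX := MP_scaled BT BB g_neq0 C0.
have He := epsilon_spec (inhabits 0) (is_MP_pinv (C%:R^-1 *: B)) (ex_intro _ _ HX).
exact: MP_unique He HX.
Qed.

Lemma MTB : M^T *m B = g *: M^T.
Proof.
have e : M^T *m M = (M^T *m M)^T by rewrite trmx_mul trmxK.
by rewrite mulmxA {1}e -trmx_mul MG trmxZ'.
Qed.

Lemma WE : WL_W h = g^-1 *: M^T.
Proof.
rewrite /WL_W pinvE -scalemxAr MTB !scalerA; congr (_ *: _).
by field; rewrite C0 g_neq0.
Qed.

Lemma bE : WL_b h = C%:R^-1 *: const_mx 1 - WL_W h *m global_mean h.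
Proof.
by rewrite /WL_b /WL_W scalemxAl.
Qed.

Lemma Wmul (y : 'cV[R]_p) c : ((g^-1 *: M^T) *m y) c 0 = g^-1 * vdot (mm c) y.
Proof.
rewrite -scalemxAl [LHS]mxE [(_ *m _) _ _]mxE vdotE.
by congr (_ * _); apply: eq_bigr => k _; rewrite [_^T _ _]mxE Mentry.
Qed.

Lemma scoreE x c : WL_score h x c = g^-1 * vdot (mm c) (x - global_mean h) + C%:R^-1.
Proof.
have e1 : forall W : 'M[R]_(C, p), vdot (row c W)^T x = (W *m x) c 0.
  by move=> W; rewrite vdotE mxE; apply: eq_bigr => k _; rewrite !mxE.
rewrite /WL_score bE e1 WE.
rewrite [X in _ + X]mxE [X in _ + (X + _)]mxE [X in _ + (_ * X + _)]mxE mulr1 [X in _ + (_ + X)]mxE.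
rewrite addrCA addrC; congr (_ + _).
by rewrite -Wmul mulmxBr [RHS]mxE [X in _ = _ + X]mxE.
Qed.

Lemma partA : (frob (WL_W h))^-1 *: (WL_W h)^T = (frob M)^-1 *: M.
Proof.
rewrite WE trmxZ' trmxK frob_scale frob_tr ger0_norm ?invr_ge0 ?ltW ?g_gt0 //.
by rewrite scalerA invfM invrK mulrAC mulfV ?g_neq0 // mul1r.
Qed.

Lemma partB x c c' : (WL_score h x c' <= WL_score h x c) =
  (vnorm (x - class_mean h c) <= vnorm (x - class_mean h c')).
Proof.
have ex : forall d, x - class_mean h d = (x - global_mean h) - mm d.
  by move=> d; rewrite opprB addrA subrK.
rewrite !scoreE lerD2r ler_pM2l ?invr_gt0 ?g_gt0 // /vnorm !ex ler_sqrt ?vdot_ge0 //.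
by rewrite (@vdot_exp _ _ _ (mm c)) (@vdot_exp _ _ _ (mm c')) !vdot_self lerD2r lerD2l lerN2 ler_pM2l.
Qed.

End Main.

Theorem theorem2 (R : rcfType) (p N C : nat) (h : 'I_N -> 'I_C -> 'cV[R]_p) :
  (2 <= C)%N -> (1 <= N)%N ->
  SigmaW h = 0 ->
  (forall c : 'I_C, class_mean h c != global_mean h) ->
  (forall c c' : 'I_C,
     vnorm (class_mean h c - global_mean h) = vnorm (class_mean h c' - global_mean h)) ->
  (forall c c' : 'I_C,
     vdot ((vnorm (class_mean h c - global_mean h))^-1 *: (class_mean h c - global_mean h))
          ((vnorm (class_mean h c' - global_mean h))^-1 *: (class_mean h c' - global_mean h))
     = C%:R / (C%:R - 1) * (c == c')%:R - 1 / (C%:R - 1)) ->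
  (frob (WL_W h))^-1 *: (WL_W h)^T = (frob (Mdot h))^-1 *: Mdot h
  /\
  (forall (x : 'cV[R]_p) (c : 'I_C),
     (forall c' : 'I_C, WL_score h x c' <= WL_score h x c) <->
     (forall c' : 'I_C, vnorm (x - class_mean h c) <= vnorm (x - class_mean h c'))).
Proof.
move=> HC HN HW Hne Hnorm Hdot.
have c0 : 'I_C := Ordinal (leq_trans (isT : (1 <= 2)%N) HC).
split; first exact: (@partA _ _ _ _ _ HC HN c0 HW Hne Hnorm Hdot).
move=> x c; split=> H c'.
- rewrite -(@partB _ _ _ _ _ HC HN c0 HW Hne Hnorm Hdot x c c'); exact: H.
- rewrite (@partB _ _ _ _ _ HC HN c0 HW Hne Hnorm Hdot x c c'); exact: H.
Qed.
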